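(* Let $\mathsf{\Sigma}\in\mathbb{R}^{N\times N_S}$ and $\mathsf{\Lambda}\in\mathbb{R}^{N\times N_L}$ be the Star-to-RWG and Loop-to-RWG matrices of a triangular surface mesh (so that $\mathsf{\Sigma}^{\mathrm T}\mathsf{\Lambda}=\mathsf{0}$), with $\mathsf{P}^\Sigma=\mathsf{\Sigma}(\mathsf{\Sigma}^{\mathrm T}\mathsf{\Sigma})^+\mathsf{\Sigma}^{\mathrm T}$, $\mathbb{P}^\Lambda=\mathsf{\Lambda}(\mathsf{\Lambda}^{\mathrm T}\mathsf{\Lambda})^+\mathsf{\Lambda}^{\mathrm T}$, and quasi-Helmholtz Laplacian filters $\mathsf{P}_n^\Sigma=\mathsf{\Sigma}((\mathsf{\Sigma}^{\mathrm T}\mathsf{\Sigma})_n)^+\mathsf{\Sigma}^{\mathrm T}$, $\mathbb{P}_n^\Lambda=\mathsf{\Lambda}((\mathsf{\Lambda}^{\mathrm T}\mathsf{\Lambda})_n)^+\mathsf{\Lambda}^{\mathrm T}$, $\mathsf{P}_n^{\Lambda H}=\mathbb{P}_n^\Lambda+\mathsf{I}-\mathsf{P}^\Sigma-\mathbb{P}^\Lambda$, $\mathbb{P}_n^{\Sigma H}=\mathsf{P}_n^\Sigma+\mathsf{I}-\mathbb{P}^\Lambda-\mathsf{P}^\Sigma$ (indices $n$ ranging over $1,\dots,N_S$ for the $\Sigma$-filters and $1,\dots,N_L$ for the $\Lambda$-filters). Then for all admissible $m,n$: $$\mathsf{P}_m^\Sigma\mathsf{P}_n^{\Lambda H}=\mathsf{0}\qquad\text{and}\qquad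 \mathbb{P}_m^\Lambda\mathbb{P}_n^{\Sigma H}=\mathsf{0}.$$
   Context: Consider a closed triangulated surface with $N$ edges, $N_S$ triangles and $N_L$ vertices; $\mathsf{I}$ is the $N\times N$ identity. Each edge $m$ is shared by two triangles $c_m^+$, $c_m^-$. $[\mathsf{\Sigma}]_{mn}=1$ if cell $n$ is $c_m^+$, $-1$ if cell $n$ is $c_m^-$, $0$ otherwise. $[\mathsf{\Lambda}]_{mn}=\pm1$ when vertex $n$ is an endpoint of edge $m$ (opposite signs for the two endpoints, fixed by the orientation convention of the RWG functions), $0$ otherwise; with this convention $\mathsf{\Sigma}^{\mathrm T}\mathsf{\Lambda}=\mathsf{0}$. $^+$ denotes the Moore–Penrose pseudo-inverse. For $\mathsf{X}\in\{\mathsf{\Sigma},\mathsf{\Lambda}\}$ with $N_x$ columns, fix an SVD $\mathsf{X}=\mathsf{U}_X\mathsf{S}_X\mathsf{V}_X^{\mathrm T}$ with $\mathsf{V}_X$ orthogonal $N_x\times N_x$ and singular values $\sigma_{X,1}\ge\dots\ge\sigma_{X,N_x}\ge0$, so $\mathsf{X}^{\mathrm T}\mathsf{X}=\mathsf{V}_X\mathrm{diag}(\sigma_{X,i}^2)\mathsf{V}_X^{\mathrm T}$. For $1\le n\le N_x$, $\mathsf{L}_{X,n}$ is diagonal with $[\mathsf{L}_{X,n}]_{ii}=\sigma_{X,i}$ if $i>N_x-n$ and $0$ otherwise, and $(\mathsf{X}^{\mathrm T}\mathsf{X})_n=\mathsf{V}_X\mathsf{L}_{X,n}^2\mathsf{V}_X^{\mathrm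 T}$. *)

(* Defs.v *)
From Stdlib Require Import ClassicalEpsilon.
From mathcomp Require Import all_boot all_order all_algebra.
Set Implicit Arguments. Unset Strict Implicit. Unset Printing Implicit Defensive.
Import Order.TTheory GRing.Theory Num.Theory.
Local Open Scope ring_scope.

Definition is_MP_inverse (R : realFieldType) (m n : nat)
    (A : 'M[R]_(m, n)) (B : 'M[R]_(n, m)) : Prop :=
  [/\ A *m B *m A = A, B *m A *m B = B,
      (A *m B)^T = A *m B & (B *m A)^T = B *m A].

(* Moore-Penrose pseudo-inverse A^+ (it exists and is unique; chosen by
   classical choice among the matrices satisfying the Penrose conditions). *)
Definition pinv (R : realFieldType) (m n : nat) (A : 'M[R]_(m, n)) : 'M[R]_(n, m) :=
  epsilon (inhabits 0) (is_MP_inverse A).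

(* "U S V^T is an SVD of X": U (N x N) and V (k x k) orthogonal, sigma the
   singular values, nonnegative and nonincreasing (index 0 = largest),
   S the N x k rectangular diagonal matrix with diagonal sigma. *)
Definition sv_mx (R : realFieldType) (N k : nat) (sigma : 'I_k -> R) : 'M[R]_(N, k) :=
  \matrix_(i < N, j < k) (if (i == j :> nat) then sigma j else 0).

Definition is_SVD (R : realFieldType) (N k : nat) (X : 'M[R]_(N, k))
    (U : 'M[R]_N) (V : 'M[R]_k) (sigma : 'I_k -> R) : Prop :=
  [/\ U^T *m U = 1%:M /\ U *m U^T = 1%:M, V^T *m V = 1%:M /\ V *m V^T = 1%:M,
      (forall i, 0 <= sigma i),
      (forall i j : 'I_k, (i <= j)%N -> sigma j <= sigma i) &
      X = U *m sv_mx N sigma *m V^T].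

(* L_{X,n}: diagonal, [L]_{ii} = sigma_i if i > k - n (1-based), else 0.
   With 0-based index i' = i - 1 the condition reads k - n <= i'. *)
Definition Lfilt (R : realFieldType) (k : nat) (sigma : 'I_k -> R) (n : nat) : 'M[R]_k :=
  diag_mx (\row_(i < k) (if (k - n <= i)%N then sigma i else 0)).

Definition XtX_n (R : realFieldType) (k : nat) (V : 'M[R]_k) (sigma : 'I_k -> R)
    (n : nat) : 'M[R]_k :=
  V *m (Lfilt sigma n *m Lfilt sigma n) *m V^T.

Definition projP (R : realFieldType) (N k : nat) (X : 'M[R]_(N, k)) : 'M[R]_N :=
  X *m pinv (X^T *m X) *m X^T.

Definition projPn (R : realFieldType) (N k : nat) (X : 'M[R]_(N, k))
    (V : 'M[R]_k) (sigma : 'I_k -> R) (n : nat) : 'M[R]_N :=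
  X *m pinv (XtX_n V sigma n) *m X^T.

(* Each row has exactly one entry +1, one entry -1, all other entries 0
   (edge m shared by c_m^+ and c_m^-; edge endpoints with opposite signs). *)
Definition signed_incidence (R : realFieldType) (N k : nat) (X : 'M[R]_(N, k)) : Prop :=
  forall m : 'I_N, exists p q : 'I_k,
    [/\ p != q, X m p = 1, X m q = -1 &
        forall j, j != p -> j != q -> X m j = 0].

(* Main.v *)
Require Import Defs.
From Stdlib Require Import ClassicalEpsilon.
From mathcomp Require Import all_boot all_order all_algebra.
Import Order.TTheory GRing.Theory Num.Theory.
Local Open Scope ring_scope.

Lemma YYt0 (R : realFieldType) m n (Y : 'M[R]_(m, n)) : Y *m Y^T = 0 -> Y = 0.
Proof.
move=> H; apply/matrixP => i j; rewrite mxE.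
have := congr1 (fun M : 'M[R]_m => M i i) H; rewrite !mxE => /eqP.
rewrite psumr_eq0 => [/allP Hall|k _]; last by rewrite mxE -expr2 sqr_ge0.
have := Hall j (mem_index_enum j); rewrite mxE -expr2 sqrf_eq0 => /eqP ->.
by [].
Qed.

Lemma key {R : realFieldType} {N k} {X : 'M[R]_(N, k)} {B} :
  is_MP_inverse (X^T *m X) B -> X^T *m (1%:M - X *m B *m X^T) = 0.
Proof.
case=> H1 _ H3 _.
set M := 1%:M - (X^T *m X) *m B.
have -> : X^T *m (1%:M - X *m B *m X^T) = M *m X^T.
  by rewrite /M mulmxBr mulmxBl mulmx1 mul1mx !mulmxA.
apply: YYt0.
have HM : M *m (X^T *m X) = 0 by rewrite /M mulmxBl mul1mx H1 subrr.
by rewrite trmx_mul trmxK !mulmxA -(mulmxA M) HM mul0mx.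
Qed.

Lemma diag_MP (R : realFieldType) k (V : 'M[R]_k) (d : 'rV[R]_k) :
  V^T *m V = 1%:M ->
  is_MP_inverse (V *m diag_mx d *m V^T) (V *m diag_mx (map_mx GRing.inv d) *m V^T).
Proof.
move=> HV.
have E : forall (a b : 'rV[R]_k), V *m diag_mx a *m V^T *m (V *m diag_mx b *m V^T)
   = V *m diag_mx (\row_i (a 0 i * b 0 i)) *m V^T.
  move=> a b; rewrite -!mulmxA (mulmxA V^T) HV mul1mx. rewrite (mulmxA (diag_mx a)) mulmx_diag.
  by congr (_ *m (diag_mx _ *m _)); apply/matrixP => i j; rewrite !mxE (ord1 i).
have S : forall a : 'rV[R]_k, (V *m diag_mx a *m V^T)^T = V *m diag_mx a *m V^T.
  by move=> a; rewrite !trmx_mul trmxK tr_diag_mx mulmxA.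
split.
- rewrite E E. apply: (congr1 (fun r => V *m diag_mx r *m V^T)); apply/matrixP => i j; rewrite !mxE (ord1 i).
  have [->|nz] := eqVneq (d 0 j) 0; first by rewrite !mul0r.
  by rewrite mulfV // mul1r.
- rewrite E E; apply: (congr1 (fun r => V *m diag_mx r *m V^T)); apply/matrixP => i j; rewrite !mxE (ord1 i).
  have [->|nz] := eqVneq (d 0 j) 0; first by rewrite invr0 !mul0r.
  by rewrite mulVf // mul1r.
- by rewrite E S.
- by rewrite E S.
Qed.

Lemma pinv_spec {R : realFieldType} {m n} {A : 'M[R]_(m, n)} :
  (exists B, is_MP_inverse A B) -> is_MP_inverse A (pinv A).
Proof. by move=> [B HB]; rewrite /pinv; apply: epsilon_spec; exists B. Qed.

Lemma XtX_MP {R : realFieldType} {N k} {X : 'M[R]_(N, k)} {U V s} :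
  is_SVD X U V s -> exists B, is_MP_inverse (X^T *m X) B.
Proof.
case=> [[HU _] [HV _] _ _ ->].
set S := sv_mx N s.
have D : S^T *m S = diag_mx (\row_j (S^T *m S) j j).
  apply/matrixP => i j; rewrite [RHS]mxE !mxE.
  have [->|nij] := eqVneq i j; first by rewrite mulr1n.
  rewrite (_ : false = 0%N :> nat) // mulr0n; apply: big1 => l _; rewrite !mxE.
  case: eqP => [li|]; case: eqP => [lj|]; rewrite ?mul0r ?mulr0 //.
  by move: nij; rewrite -(inj_eq val_inj) /= -li -lj eqxx.
have -> : (U *m S *m V^T)^T *m (U *m S *m V^T) = V *m (S^T *m S) *m V^T.
  rewrite !trmx_mul trmxK !mulmxA -(mulmxA _ U^T) HU mulmx1 -!mulmxA; congr (_ *m _); rewrite !mulmxA.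
rewrite D; eexists; exact: diag_MP.
Qed.

Lemma gen (R : realFieldType) N k l (X : 'M[R]_(N, k)) (Y : 'M[R]_(N, l))
  (U : 'M[R]_N) V s W t m n :
  is_SVD X U V s -> X^T *m Y = 0 ->
  projPn X V s m *m (projPn Y W t n + 1%:M - projP X - projP Y) = 0.
Proof.
move=> HS HXY.
have H := key (pinv_spec (XtX_MP HS)).
rewrite /projPn /projP -mulmxA.
have -> : X^T *m (Y *m pinv (XtX_n W t n) *m Y^T + 1%:M
    - X *m pinv (X^T *m X) *m X^T - Y *m pinv (Y^T *m Y) *m Y^T) = 0.
  rewrite !mulmxBr mulmxDr !mulmxA HXY !mul0mx add0r subr0.
  by rewrite -H mulmxBr !mulmxA.
by rewrite mulmx0.
Qed.

Theorem mainTheorem5 (R : realFieldType) (N NS NL : nat)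
    (Sig : 'M[R]_(N, NS)) (Lam : 'M[R]_(N, NL))
    (US : 'M[R]_N) (VS : 'M[R]_NS) (sS : 'I_NS -> R)
    (UL : 'M[R]_N) (VL : 'M[R]_NL) (sL : 'I_NL -> R) :
  signed_incidence Sig -> signed_incidence Lam ->
  Sig^T *m Lam = 0 ->
  is_SVD Sig US VS sS -> is_SVD Lam UL VL sL ->
  (forall m n : nat, (1 <= m <= NS)%N -> (1 <= n <= NL)%N ->
     projPn Sig VS sS m *m
       (projPn Lam VL sL n + 1%:M - projP Sig - projP Lam) = 0) /\
  (forall m n : nat, (1 <= m <= NL)%N -> (1 <= n <= NS)%N ->
     projPn Lam VL sL m *m
       (projPn Sig VS sS n + 1%:M - projP Lam - projP Sig) = 0).
Proof.
move=> _ _ H0 HS HL; split => m n _ _; first exact: gen HS H0.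
apply: gen HL _; by rewrite -(trmxK Sig) -trmx_mul H0 trmx0.
Qed.
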